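(* Let $m\ge2$ be an integer, $t\ge0$, $\lambda>0$, $s=\frac{t}{2\lambda}$, and consider searching on $m$ rays with turn cost $t$ and lower bound $\lambda$. (i) If $s\le\frac{1}{(\frac{m}{m-1})^{m-1}-1}$, the cyclic strategy with distances $$x_i=\left(\left(\frac{1}{m-1}\Big(1-\Big(\big(\tfrac{m}{m-1}\big)^{m-1}-1\Big)s\Big)\,i+(1+s)\right)\Big(\frac{m}{m-1}\Big)^i-s\right)\lambda$$ is optimal and has competitive ratio $1+2\frac{m^m}{(m-1)^{m-1}}$. (ii) If $s\ge\frac{1}{(\frac{m}{m-1})^{m-1}-1}$, the cyclic strategy with distances $$x_i=\Big((1+s)\big(1+s^{-1}\big)^{\frac{i}{m-1}}-s\Big)\lambda$$ has competitive ratio $$\frac{\big(1+s^{-1}\big)^{-\frac{1}{m-1}}-\big(3+2s^{-1}\big)}{\big(1+s^{-1}\big)^{-\frac{1}{m-1}}-1}.$$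
   Context: Searching on $m$ rays with turn cost. Fix $\lambda>0$, $t\ge0$. A search strategy is a sequence $(x_i,r_i)_{i\ge1}$ with $x_i>0$, $r_i\in\{1,\dots,m\}$ (the $m$ rays emanating from the origin), such that $\sup\{x_i:r_i=r\}=\infty$ for every ray $r$. At step $i$ the searcher walks distance $x_i$ from the origin along ray $r_i$ and, if the target is not found, walks back to the origin, paying an extra turn cost $t$; so each unsuccessful step costs $2x_i+t$. The target lies on one ray at unknown distance $D\ge\lambda$ and is found at the first step $j$ with $r_j$ equal to its ray and $x_j\ge D$; the total cost is then $\sum_{i=1}^{j-1}(2x_i+t)+D$. The competitive ratio is the supremum over all target positions of total cost divided by $D$; a strategy is optimal if its competitive ratio is minimal among all strategies. A cyclic strategy with distances $x_i$ visits the rays in round-robin order, $r_i\equiv i \pmod m$; for increasing distances its competitive ratio equals $\max\Big\{\frac{\sum_{i=1}^{m-1}(2x_i+t)+\lambda}{\lambda},\ \sup_{n\ge1}\frac{\sum_{i=1}^{n+m-1}(2x_i+t)+x_n}{x_n}\Big\}$. *)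

(* Defs.v *)
From Stdlib Require Import Reals Lra Lia.
Open Scope R_scope.

(* A search strategy on m rays: step i (i >= 1) goes distance x i along ray r i.
   Values at index 0 are irrelevant (steps are numbered from 1, as in the paper). *)
Definition is_strategy (m : nat) (x : nat -> R) (r : nat -> nat) : Prop :=
  (forall i : nat, (1 <= i)%nat -> 0 < x i /\ (1 <= r i <= m)%nat) /\
  (forall ray : nat, (1 <= ray <= m)%nat ->
     forall B : R, exists i : nat, (1 <= i)%nat /\ r i = ray /\ B < x i).

Fixpoint step_costs (x : nat -> R) (t : R) (n : nat) : R :=
  match n with
  | O => 0
  | S k => step_costs x t k + (2 * x (S k) + t)
  end.

Definition search_cost (x : nat -> R) (r : nat -> nat) (t : R)
    (ray : nat) (D : R) (c : R) : Prop :=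
  exists j : nat, (1 <= j)%nat /\ r j = ray /\ D <= x j /\
    (forall i : nat, (1 <= i)%nat -> (i < j)%nat -> ~ (r i = ray /\ D <= x i)) /\
    c = step_costs x t (j - 1) + D.

Definition ratios (m : nat) (lam t : R) (x : nat -> R) (r : nat -> nat) (q : R) : Prop :=
  exists (ray : nat) (D c : R), (1 <= ray <= m)%nat /\ lam <= D /\
    search_cost x r t ray D c /\ q = c / D.

Definition has_competitive_ratio (m : nat) (lam t : R)
    (x : nat -> R) (r : nat -> nat) (C : R) : Prop :=
  is_lub (ratios m lam t x r) C.

(* Optimal: competitive ratio C is minimal among all strategies
   (strategies with unbounded ratio set have competitive ratio +infinity). *)
Definition is_optimal (m : nat) (lam t : R) (x : nat -> R) (r : nat -> nat) : Prop :=
  exists C : R, has_competitive_ratio m lam t x r C /\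
    forall (x' : nat -> R) (r' : nat -> nat) (C' : R),
      is_strategy m x' r' -> has_competitive_ratio m lam t x' r' C' -> C <= C'.

Definition cyclic_rays (m : nat) (i : nat) : nat :=
  if Nat.eqb (Nat.modulo i m) 0 then m else Nat.modulo i m.

(* Main.v *)
Require Import Defs.
From Stdlib Require Import Reals Lra Lia List ClassicalEpsilon Classical.
Open Scope R_scope.

Lemma bernoulli (n : nat) (h : R) : -1 <= h -> 1 + INR n * h <= (1 + h) ^ n.
Proof.
  intro H. induction n as [|n IH]; cbn [pow]; [simpl; lra|].
  rewrite S_INR.
  assert (0 <= INR n) by apply pos_INR.
  assert (0 <= INR n * (h*h)) by (apply Rmult_le_pos; nra).
  nra.
Qed.

Lemma amgm (p : nat) (a b : R) : 0 <= a -> 0 < b ->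
  a * b ^ p <= ((a + INR p * b) / INR (S p)) ^ (S p).
Proof.
  intros Ha Hb.
  assert (HP : 0 < INR (S p)) by (apply lt_0_INR; lia).
  set (h := (a / b - 1) / INR (S p)).
  assert (Hh : -1 <= h).
  { assert (Q : 0 <= a / b) by (apply Rmult_le_pos; [lra| left; apply Rinv_0_lt_compat; lra]).
    assert (HS1 : 1 <= INR (S p)) by (rewrite S_INR; pose proof (pos_INR p); lra).
    assert (Eh : h * INR (S p) = a / b - 1) by (unfold h; field; lra).
    destruct (Rle_dec (-1) h) as [|N]; [auto|]. nra. }
  assert (E : (a + INR p * b) / INR (S p) = b * (1 + h)).
  { unfold h. rewrite S_INR. field. split; [lra|]. rewrite S_INR in HP; lra. }
  rewrite E, Rpow_mult_distr.
  pose proof (bernoulli (S p) h Hh) as B.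
  assert (E2 : 1 + INR (S p) * h = a / b).
  { unfold h. field. split; lra. }
  rewrite E2 in B. cbn [pow] in *.
  assert (0 < b ^ p) by (apply pow_lt; lra).
  replace (a * b ^ p) with (b * b ^ p * (a / b)) by (field; lra).
  apply Rmult_le_compat_l; [nra|exact B].
Qed.

Fixpoint sumR (f : nat -> R) (k p : nat) : R :=
  match p with O => 0 | S p' => sumR f k p' + f (k + p')%nat end.

Lemma sumR_shift f k p : sumR f (S k) p + f k = sumR f k p + f (k + p)%nat.
Proof.
  induction p as [|p IH]; simpl.
  - replace (k+0)%nat with k by lia; lra.
  - replace (k + S p)%nat with (S (k + p)) by lia. lra.
Qed.

Lemma sumR_ge f k p c : (forall i, (i < p)%nat -> c <= f (k + i)%nat) -> INR p * c <= sumR f k p.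
Proof.
  induction p as [|p IH]; intros H; cbn [sumR]; [simpl; lra|].
  rewrite S_INR. assert (c <= f (k+p)%nat) by (apply H; lia).
  assert (INR p * c <= sumR f k p) by (apply IH; intros; apply H; lia). lra.
Qed.

Lemma potential (S : nat -> R) (k0 p : nat) (K Ks : R) :
  (1 <= p)%nat -> 0 < K -> 0 < Ks ->
  (forall k, (k0 <= k)%nat -> 0 < S k /\ S k <= S (Datatypes.S k)) ->
  (forall k, (k0 <= k)%nat -> S (k + Datatypes.S p)%nat * (S k) ^ p * Ks <= K * (S (Datatypes.S k)) ^ (Datatypes.S p)) ->
  Ks <= K.
Proof.
  intros Hp HK HKs Hpos Hineq.
  destruct (Rle_dec Ks K) as [|Hn]; [assumption|exfalso].
  set (u := fun k => ln (S k)).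
  set (eps := ln Ks - ln K).
  assert (Heps : 0 < eps).
  { unfold eps. assert (ln K < ln Ks) by (apply ln_increasing; lra). lra. }
  assert (Hmono : forall k j, (k0 <= k)%nat -> (k <= j)%nat -> S k <= S j).
  { intros k j Hk Hj. induction Hj; [lra|].
    pose proof (Hpos m ltac:(lia)). lra. }
  assert (Hposj : forall j, (k0 <= j)%nat -> 0 < S j) by (intros; apply Hpos; auto).
  assert (Hu : forall k j, (k0 <= k)%nat -> (k <= j)%nat -> u k <= u j).
  { intros k j Hk Hj. unfold u. destruct (Rle_lt_or_eq_dec _ _ (Hmono k j Hk Hj)) as [L|E].
    - left. apply ln_increasing; auto.
    - rewrite E; lra. }
  set (T := fun k => sumR u (Datatypes.S k) p - INR p * u k).
  assert (HT0 : forall k, (k0 <= k)%nat -> 0 <= T k).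
  { intros k Hk. unfold T. assert (INR p * u k <= sumR u (Datatypes.S k) p); [|lra].
    apply sumR_ge. intros. apply Hu; lia. }
  assert (Hstep : forall k, (k0 <= k)%nat -> T (Datatypes.S k) <= T k - eps).
  { intros k Hk. unfold T.
    pose proof (sumR_shift u (Datatypes.S k) p) as Sh.
    assert (Hlog : u (k + Datatypes.S p)%nat + INR p * u k + ln Ks <= ln K + INR (Datatypes.S p) * u (Datatypes.S k)).
    { pose proof (Hineq k Hk) as I.
      assert (P1 : 0 < S (k + Datatypes.S p)%nat) by (apply Hposj; lia).
      assert (P2 : 0 < S k) by (apply Hposj; lia).
      assert (P3 : 0 < S (Datatypes.S k)) by (apply Hposj; lia).
      assert (Q1 : 0 < S k ^ p) by (apply pow_lt; auto).
      assert (Q2 : 0 < S (Datatypes.S k) ^ Datatypes.S p) by (apply pow_lt; auto).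
      assert (L : ln (S (k + Datatypes.S p)%nat * S k ^ p * Ks) <= ln (K * S (Datatypes.S k) ^ Datatypes.S p)).
      { destruct (Rle_lt_or_eq_dec _ _ I) as [L|E].
        - left. apply ln_increasing; [|auto]. repeat apply Rmult_lt_0_compat; auto.
        - rewrite E; lra. }
      rewrite (ln_mult _ Ks) in L by (try apply Rmult_lt_0_compat; auto).
      rewrite (ln_mult _ (S k ^ p)) in L by auto.
      rewrite (ln_mult K) in L by auto.
      rewrite (ln_pow (S k)) in L by auto.
      rewrite (ln_pow (S (Datatypes.S k))) in L by auto.
      unfold u. lra. }
    replace (Datatypes.S k + p)%nat with (k + Datatypes.S p)%nat in Sh by lia.
    unfold eps. rewrite S_INR in Hlog. lra. }
  assert (Hiter : forall N, T (k0 + N)%nat <= T k0 - INR N * eps).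
  { induction N as [|N IH].
    - replace (k0 + 0)%nat with k0 by lia. simpl. lra.
    - replace (k0 + Datatypes.S N)%nat with (Datatypes.S (k0 + N)) by lia.
      pose proof (Hstep (k0 + N)%nat ltac:(lia)). rewrite S_INR. lra. }
  destruct (INR_archimed eps (T k0) Heps) as [N HN].
  pose proof (Hiter N). pose proof (HT0 (k0 + N)%nat ltac:(lia)). lra.
Qed.

Lemma cyc_small p j : (1 <= j <= S p)%nat -> cyclic_rays (S p) j = j.
Proof.
  intros H. unfold cyclic_rays.
  destruct (Nat.eq_dec j (S p)) as [->|Hne].
  - rewrite Nat.Div0.mod_same. reflexivity.
  - rewrite Nat.mod_small by lia. destruct (Nat.eqb_spec j 0); lia.
Qed.

Lemma cyc_period p n : cyclic_rays (S p) (n + S p) = cyclic_rays (S p) n.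
Proof.
  unfold cyclic_rays.
  replace (n + S p)%nat with (n + 1 * S p)%nat by lia.
  rewrite Nat.Div0.mod_add. reflexivity.
Qed.

Lemma cyc_period_mul p n k : cyclic_rays (S p) (n + k * S p) = cyclic_rays (S p) n.
Proof.
  unfold cyclic_rays. rewrite Nat.Div0.mod_add. reflexivity.
Qed.

Lemma cyc_range p i : (1 <= cyclic_rays (S p) i <= S p)%nat.
Proof.
  unfold cyclic_rays. destruct (Nat.eqb_spec (i mod S p) 0); [lia|].
  pose proof (Nat.mod_upper_bound i (S p) ltac:(lia)). lia.
Qed.

Lemma step_costs_mono x t a b : 0 <= t -> (forall i, (1 <= i)%nat -> 0 <= x i) -> (a <= b)%nat ->
  step_costs x t a <= step_costs x t b.
Proof.
  intros Ht Hx H. induction H; [lra|]. simpl. pose proof (Hx (S m) ltac:(lia)). lra.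
Qed.

Lemma div_le_of (c D C : R) : 0 < D -> c <= C * D -> c / D <= C.
Proof.
  intros HD H. apply Rmult_le_reg_r with D; auto.
  replace (c / D * D) with c by (field; lra). lra.
Qed.

Lemma cyclic_ratio (p : nat) (t lam C : R) (x : nat -> R) :
  (1 <= p)%nat -> 0 <= t -> 0 < lam -> 1 <= C ->
  x 0%nat = lam -> (forall i, lam <= x i) ->
  (forall n, step_costs x t (n + p) = (C - 1) * x n) ->
  has_competitive_ratio (S p) lam t x (cyclic_rays (S p)) C.
Proof.
  intros Hp Ht Hl HC Hx0 Hxl Hid.
  assert (Hx : forall i, (1 <= i)%nat -> 0 <= x i) by (intros i _; pose proof (Hxl i); lra).
  split.
  - intros q [ray [D [c [Hray [HD [Hsc Hq]]]]]].
    destruct Hsc as [j [Hj [Hrj [HDj [Hmin Hc]]]]].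
    subst q. apply div_le_of; [lra|]. subst c.
    destruct (Compare_dec.le_lt_dec j (S p)) as [Hjm|Hjm].
    + assert (step_costs x t (j - 1) <= step_costs x t p)
        by (apply step_costs_mono; auto; lia).
      pose proof (Hid 0%nat) as H0. simpl in H0. rewrite Hx0 in H0.
      assert ((C - 1) * lam <= (C - 1) * D) by (apply Rmult_le_compat_l; lra).
      lra.
    + set (n := (j - S p)%nat).
      assert (Ej : j = (n + S p)%nat) by (unfold n; lia).
      assert (Hrn : cyclic_rays (S p) n = ray).
      { rewrite <- Hrj, Ej, cyc_period. reflexivity. }
      assert (HDn : x n < D).
      { destruct (Rlt_le_dec (x n) D) as [|Hle]; auto. exfalso.
        apply (Hmin n); [unfold n; lia| lia | split; auto]. }
      replace (j - 1)%nat with (n + p)%nat by lia.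
      rewrite Hid.
      assert ((C - 1) * x n <= (C - 1) * D) by (apply Rmult_le_compat_l; lra).
      lra.
  - intros b Hb. apply Hb.
    exists (S p), lam, (step_costs x t p + lam).
    split; [lia|]. split; [lra|]. split.
    + exists (S p). split; [lia|]. split; [apply cyc_small; lia|].
      split; [apply Hxl|]. split.
      * intros i Hi1 Hi2 [Hr _]. rewrite cyc_small in Hr by lia. lia.
      * replace (S p - 1)%nat with p by lia. reflexivity.
    + pose proof (Hid 0%nat) as H0. simpl in H0. rewrite Hx0 in H0. rewrite H0.
      field. lra.
Qed.

Lemma cyclic_strategy (p : nat) (lam delta : R) (x : nat -> R) :
  0 < lam -> 0 < delta -> (forall i, lam + INR i * delta <= x i) ->
  is_strategy (S p) x (cyclic_rays (S p)).
Proof.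
  intros Hl Hd Hx. split.
  - intros i Hi. split; [pose proof (Hx i); pose proof (pos_INR i);
      assert (0 <= INR i * delta) by (apply Rmult_le_pos; lra); lra|].
    apply cyc_range.
  - intros ray Hray B.
    destruct (INR_archimed delta B Hd) as [N HN].
    exists (ray + N * S p)%nat. split; [lia|]. split.
    + rewrite cyc_period_mul. apply cyc_small; lia.
    + pose proof (Hx (ray + N * S p)%nat).
      assert (INR N <= INR (ray + N * S p)) by (apply le_INR; nia).
      assert (INR N * delta <= INR (ray + N * S p) * delta) by (apply Rmult_le_compat_r; lra).
      lra.
Qed.

Lemma case1_facts (p : nat) (t lam : R) : (1 <= p)%nat -> 0 <= t -> 0 < lam ->
  let s := t / (2 * lam) in
  let q := INR (S p) / (INR (S p) - 1) in
  s <= 1 / (q ^ p - 1) ->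
  let x := fun i : nat =>
    (( / (INR (S p) - 1) * (1 - (q ^ p - 1) * s) * INR i + (1 + s)) * q ^ i - s) * lam in
  x 0%nat = lam /\ (forall i, lam + INR i * (lam / INR p) <= x i) /\
  (forall n, step_costs x t (n + p) =
     (1 + 2 * (INR (S p) ^ S p / (INR (S p) - 1) ^ p) - 1) * x n).
Proof.
  intros Hp Ht Hl s q Hs x.
  assert (HP1 : 1 <= INR p) by (apply (le_INR 1); lia).
  set (P := INR p) in *.
  assert (ES : INR (S p) = P + 1) by (rewrite S_INR; reflexivity).
  assert (EP : INR (S p) - 1 = P) by lra.
  assert (Eq : q = (P + 1) / P) by (unfold q; rewrite EP, ES; reflexivity).
  assert (Hq1 : q - 1 = / P) by (rewrite Eq; field; lra).
  assert (Hqpos : 0 < q) by (rewrite Eq; apply Rdiv_lt_0_compat; lra).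
  assert (Hs0 : 0 <= s) by (unfold s; apply Rmult_le_pos; [lra| left; apply Rinv_0_lt_compat; lra]).
  assert (Et : t = 2 * s * lam) by (unfold s; field; lra).
  assert (Hqp : 1 < q ^ p).
  { pose proof (bernoulli p (q - 1) ltac:(rewrite Hq1; assert (0 < / P) by (apply Rinv_0_lt_compat; lra); lra)).
    replace (1 + (q - 1)) with q in H by ring. rewrite Hq1 in H.
    assert (0 < P * / P) by (rewrite Rinv_r; lra). fold P in H. lra. }
  set (A := / (INR (S p) - 1) * (1 - (q ^ p - 1) * s)) in x.
  set (B := 1 + s) in x.
  assert (HA : 0 <= A).
  { unfold A. rewrite EP. apply Rmult_le_pos; [left; apply Rinv_0_lt_compat; lra|].
    assert ((q ^ p - 1) * s <= 1).
    { apply Rmult_le_reg_r with (/ (q ^ p - 1)). apply Rinv_0_lt_compat; lra.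
      replace ((q ^ p - 1) * s * / (q ^ p - 1)) with s by (field; lra). unfold Rdiv in Hs. lra. }
    lra. }
  assert (EAP : A * P = 1 - (q ^ p - 1) * s) by (unfold A; rewrite EP; field; lra).
  split; [unfold x, B; simpl; ring|]. split.
  - intro i. unfold x.
    pose proof (bernoulli i (q - 1) ltac:(rewrite Hq1; assert (0 < / P) by (apply Rinv_0_lt_compat; lra); lra)) as Bi.
    replace (1 + (q - 1)) with q in Bi by ring. rewrite Hq1 in Bi.
    assert (0 <= INR i) by apply pos_INR.
    assert (0 <= q ^ i) by (apply pow_le; lra).
    assert (0 <= A * INR i * q ^ i) by (apply Rmult_le_pos; [apply Rmult_le_pos|]; lra).
    assert (0 <= INR i / P) by (apply Rmult_le_pos; [lra| left; apply Rinv_0_lt_compat; lra]).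
    assert (INR i * / P = INR i / P) by reflexivity.
    assert (Hx : lam + INR i * (lam / P) = (1 + INR i / P) * lam) by (field; lra).
    rewrite Hx. apply Rmult_le_compat_r; [lra|].
    unfold B. nra.
  -
    assert (CF : forall k, step_costs x t k =
       lam * (2 * P * q ^ (S k) * (A * (INR k - P) + B) - 2 * P * q * (B - A * P))).
    { induction k as [|k IH].
      - simpl. ring.
      - cbn [step_costs]. rewrite IH. unfold x. rewrite Et. rewrite S_INR.
        cbn [pow]. rewrite Eq. field. lra. }
    intro n. rewrite CF. rewrite plus_INR. fold P.
    assert (Ec0 : B - A * P = q ^ p * s) by (unfold B; rewrite EAP; ring).
    rewrite Ec0.
    assert (Ek : (INR (S p) ^ S p / (INR (S p) - 1) ^ p) = P * q ^ S p).
    { rewrite EP, ES, Eq. unfold Rdiv. rewrite Rpow_mult_distr, pow_inv. cbn [pow]. field.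
      split; [apply pow_nonzero|]; lra. }
    rewrite Ek. unfold x.
    replace (S (n + p)) with (n + S p)%nat by lia. rewrite pow_add. cbn [pow]. ring.
Qed.

Lemma case2_facts (p : nat) (t lam : R) : (1 <= p)%nat -> 0 <= t -> 0 < lam ->
  let s := t / (2 * lam) in
  let q := INR (S p) / (INR (S p) - 1) in
  1 / (q ^ p - 1) <= s ->
  let x := fun i : nat =>
       ((1 + s) * Rpower (1 + / s) (INR i / (INR (S p) - 1)) - s) * lam in
  let a := Rpower (1 + / s) (- (1 / (INR (S p) - 1))) in
  let C := (a - (3 + 2 * / s)) / (a - 1) in
  x 0%nat = lam /\ (exists delta, 0 < delta /\ forall i, lam + INR i * delta <= x i) /\
  1 <= C /\ (forall n, step_costs x t (n + p) = (C - 1) * x n).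
Proof.
  intros Hp Ht Hl s q Hs x a C.
  assert (HP1 : 1 <= INR p) by (apply (le_INR 1); lia).
  set (P := INR p) in *.
  assert (ES : INR (S p) = P + 1) by (rewrite S_INR; reflexivity).
  assert (EP : INR (S p) - 1 = P) by lra.
  assert (Eq : q = (P + 1) / P) by (unfold q; rewrite EP, ES; reflexivity).
  assert (Hq1 : q - 1 = / P) by (rewrite Eq; field; lra).
  assert (HiP : 0 < / P) by (apply Rinv_0_lt_compat; lra).
  assert (Hqp : 1 < q ^ p).
  { pose proof (bernoulli p (q - 1) ltac:(lra)) as H.
    replace (1 + (q - 1)) with q in H by ring. rewrite Hq1 in H.
    assert (P * / P = 1) by (field; lra). fold P in H. lra. }
  assert (Hs0 : 0 < s).
  { assert (0 < 1 / (q ^ p - 1)) by (apply Rdiv_lt_0_compat; lra). lra. }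
  assert (Et : t = 2 * s * lam) by (unfold s; field; lra).
  set (al := 1 + / s) in *.
  assert (Hal : 1 < al) by (unfold al; assert (0 < / s) by (apply Rinv_0_lt_compat; lra); lra).
  set (be := Rpower al (1 / P)).
  assert (Hbe : 1 < be).
  { unfold be. rewrite <- (Rpower_O al) at 1 by lra. apply Rpower_lt; auto.
    apply Rdiv_lt_0_compat; lra. }
  assert (Epow : forall i, Rpower al (INR i / (INR (S p) - 1)) = be ^ i).
  { intro i. unfold be. rewrite <- (Rpower_pow i (Rpower al (1 / P))) by (fold be; lra). rewrite Rpower_mult.
    rewrite EP. f_equal. field. lra. }
  assert (Ebp : be ^ p = al).
  { rewrite <- (Epow p). rewrite EP. fold P. replace (P / P) with 1 by (field; lra).
    apply Rpower_1; lra. }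
  assert (Ea : a = / be).
  { unfold a. rewrite Rpower_Ropp. rewrite EP. reflexivity. }
  assert (Ex : forall i, x i = ((1 + s) * be ^ i - s) * lam) by (intro i; unfold x; rewrite Epow; reflexivity).
  assert (EC : C - 1 = 2 * al * be / (be - 1)).
  { unfold C. rewrite Ea. unfold al. field. split; [lra|]. split; [|lra].
    intro H. assert (/ be = 1) by lra. assert (be = 1).
    { rewrite <- (Rinv_inv be). rewrite H0. apply Rinv_1. } lra. }
  split; [rewrite Ex; simpl; ring|]. split; [|split].
  - exists ((be - 1) * lam). split; [apply Rmult_lt_0_compat; lra|].
    intro i. rewrite Ex.
    pose proof (bernoulli i (be - 1) ltac:(lra)) as Bi.
    replace (1 + (be - 1)) with be in Bi by ring.
    assert (0 <= INR i) by apply pos_INR.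
    assert (0 <= INR i * (be - 1)) by (apply Rmult_le_pos; lra).
    assert (Hx : lam + INR i * ((be - 1) * lam) = (1 + INR i * (be - 1)) * lam) by ring.
    rewrite Hx. apply Rmult_le_compat_r; [lra|]. nra.
  - assert (0 < 2 * al * be / (be - 1)) by (apply Rdiv_lt_0_compat; [|lra]; 
       apply Rmult_lt_0_compat; lra). lra.
  - assert (CF : forall k, step_costs x t k = 2 * lam * (1 + s) * be * (be ^ k - 1) / (be - 1)).
    { induction k as [|k IH].
      - simpl. field. lra.
      - cbn [step_costs]. rewrite IH, Ex, Et. cbn [pow]. field. lra. }
    intro n. rewrite CF, EC, Ex, pow_add, Ebp. unfold al. field. split; lra.
Qed.

Definition first_hit (P : nat -> Prop) (n : nat) : Prop :=
  (1 <= n)%nat /\ P n /\ forall i, (1 <= i)%nat -> (i < n)%nat -> ~ P i.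

Lemma least_exists (P : nat -> Prop) : (exists n, (1 <= n)%nat /\ P n) -> exists n, first_hit P n.
Proof.
  intros [n [Hn HP]].
  induction n as [n IH] using (well_founded_induction Wf_nat.lt_wf).
  destruct (classic (exists i, (1 <= i)%nat /\ (i < n)%nat /\ P i)) as [[i [Hi1 [Hi2 Hi3]]]|Hno].
  - apply (IH i Hi2 Hi1 Hi3).
  - exists n. split; [auto|]. split; [auto|]. intros i H1 H2 H3. apply Hno. eauto.
Qed.

Definition tau (x : nat -> R) (r : nat -> nat) (rho : nat) (v : R) : nat :=
  epsilon (inhabits 0%nat) (first_hit (fun i => r i = rho /\ v < x i)).

Fixpoint lev (x : nat -> R) (r : nat -> nat) (rho : nat) (j : nat) : R :=
  match j with
  | O => 0
  | S j' => x (tau x r rho (lev x r rho j'))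
  end.



Lemma tau_spec m x r rho v : is_strategy m x r -> (1 <= rho <= m)%nat ->
  first_hit (fun i => r i = rho /\ v < x i) (tau x r rho v).
Proof.
  intros [_ Hu] Hr. unfold tau. apply epsilon_spec. apply least_exists.
  destruct (Hu rho Hr v) as [i [Hi [Hri Hxi]]]. eauto.
Qed.

Lemma tau_before m x r rho v i : is_strategy m x r -> (1 <= rho <= m)%nat ->
  (1 <= i)%nat -> (i < tau x r rho v)%nat -> r i = rho -> x i <= v.
Proof.
  intros Hs Hr Hi1 Hi2 Hri. destruct (tau_spec m x r rho v Hs Hr) as [_ [_ Hm]].
  destruct (Rle_dec (x i) v) as [|N]; auto. exfalso. apply (Hm i Hi1 Hi2). split; auto. lra.
Qed.

Lemma lev_inc m x r rho j : is_strategy m x r -> (1 <= rho <= m)%nat ->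
  lev x r rho j < lev x r rho (S j).
Proof.
  intros Hs Hr. simpl. destruct (tau_spec m x r rho (lev x r rho j) Hs Hr) as [_ [[_ H] _]]. exact H.
Qed.

Lemma lev_nonneg m x r rho j : is_strategy m x r -> (1 <= rho <= m)%nat -> 0 <= lev x r rho j.
Proof.
  intros Hs Hr. induction j; simpl; [lra|]. pose proof (lev_inc m x r rho j Hs Hr). simpl in H. lra.
Qed.

Lemma lev_mono m x r rho j k : is_strategy m x r -> (1 <= rho <= m)%nat -> (j <= k)%nat ->
  lev x r rho j <= lev x r rho k.
Proof.
  intros Hs Hr H. induction H; [lra|]. pose proof (lev_inc m x r rho m0 Hs Hr). lra.
Qed.

Lemma tau_inc m x r rho j : is_strategy m x r -> (1 <= rho <= m)%nat ->
  (tau x r rho (lev x r rho j) < tau x r rho (lev x r rho (S j)))%nat.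
Proof.
  intros Hs Hr.
  set (n := tau x r rho (lev x r rho j)).
  set (n' := tau x r rho (lev x r rho (S j))).
  destruct (tau_spec m x r rho (lev x r rho j) Hs Hr) as [Hn1 [[Hrn Hxn] Hmn]].
  destruct (tau_spec m x r rho (lev x r rho (S j)) Hs Hr) as [Hn1' [[Hrn' Hxn'] Hmn']].
  fold n in Hn1, Hrn, Hxn, Hmn. fold n' in Hn1', Hrn', Hxn', Hmn'.
  pose proof (lev_inc m x r rho j Hs Hr) as Hinc.
  destruct (Compare_dec.lt_eq_lt_dec n n') as [[L|E]|G]; auto; exfalso.
  - assert (lev x r rho (S j) = x n) by reflexivity. rewrite <- E in Hxn'. lra.
  - apply (Hmn n' Hn1' G). split; auto. lra.
Qed.

Lemma tau_ge m x r rho j : is_strategy m x r -> (1 <= rho <= m)%nat ->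
  (S j <= tau x r rho (lev x r rho j))%nat.
Proof.
  intros Hs Hr. induction j.
  - destruct (tau_spec m x r rho (lev x r rho 0) Hs Hr) as [H _]. exact H.
  - pose proof (tau_inc m x r rho j Hs Hr). lia.
Qed.

Lemma lev_unbounded m x r rho B : is_strategy m x r -> (1 <= rho <= m)%nat ->
  exists j, B < lev x r rho j.
Proof.
  intros Hs Hr. destruct Hs as [Hp Hu] eqn:E. destruct (Hu rho Hr B) as [n [Hn [Hrn HBn]]].
  apply NNPP. intro Hno.
  assert (Hall : forall j, lev x r rho j <= B).
  { intro j. destruct (Rle_dec (lev x r rho j) B) as [|N]; auto. exfalso. apply Hno. exists j. lra. }
  assert (Ht : forall j, (tau x r rho (lev x r rho j) <= n)%nat).
  { intro j. destruct (tau_spec m x r rho (lev x r rho j) Hs Hr) as [_ [_ Hm]].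
    destruct (Compare_dec.le_lt_dec (tau x r rho (lev x r rho j)) n) as [|L]; auto.
    exfalso. apply (Hm n Hn L). split; auto. pose proof (Hall j). lra. }
  pose proof (Ht n). pose proof (tau_ge m x r rho n Hs Hr). lia.
Qed.

Fixpoint amin (f : nat -> R) (n : nat) : nat :=
  match n with
  | O => 1%nat
  | S n' => match n' with
            | O => 1%nat
            | S _ => let a := amin f n' in if Rle_dec (f a) (f n) then a else n
            end
  end.

Lemma amin_spec f n : (1 <= n)%nat ->
  (1 <= amin f n <= n)%nat /\ forall rho, (1 <= rho <= n)%nat -> f (amin f n) <= f rho.
Proof.
  intros Hn. induction n as [|n IH]; [lia|].
  destruct n as [|n'].
  - simpl. split; [lia|]. intros rho Hr. replace rho with 1%nat by lia. lra.
  - destruct (IH ltac:(lia)) as [IH1 IH2].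
    change (amin f (S (S n'))) with
      (if Rle_dec (f (amin f (S n'))) (f (S (S n'))) then amin f (S n') else S (S n')).
    destruct (Rle_dec (f (amin f (S n'))) (f (S (S n')))) as [L|L].
    + split; [lia|]. intros rho Hr. destruct (Nat.eq_dec rho (S (S n'))) as [->|N]; auto.
      apply IH2. lia.
    + split; [lia|]. intros rho Hr. destruct (Nat.eq_dec rho (S (S n'))) as [->|N]; [lra|].
      pose proof (IH2 rho ltac:(lia)). lra.
Qed.

Definition cand x r (c : nat -> nat) (rho : nat) : R := lev x r rho (S (c rho)).

Fixpoint cnt (m : nat) x r (k : nat) : nat -> nat :=
  match k with
  | O => fun _ => O
  | S k' => let c := cnt m x r k' in
            let pk := amin (cand x r c) m in
            fun rho => if Nat.eqb rho pk then S (c rho) else c rho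
  end.

Definition pick m x r k := amin (cand x r (cnt m x r k)) m.

Definition w m x r (k : nat) : R :=
  match k with
  | O => 0
  | S k' => cand x r (cnt m x r k') (pick m x r k')
  end.

Lemma cnt_S m x r k rho : cnt m x r (S k) rho =
  if Nat.eqb rho (pick m x r k) then S (cnt m x r k rho) else cnt m x r k rho.
Proof. reflexivity. Qed.

Lemma pick_range m x r k : (1 <= m)%nat -> (1 <= pick m x r k <= m)%nat.
Proof. intros H. apply (amin_spec _ m H). Qed.

Lemma pick_min m x r k rho : (1 <= m)%nat -> (1 <= rho <= m)%nat ->
  w m x r (S k) <= cand x r (cnt m x r k) rho.
Proof. intros H Hr. apply (amin_spec _ m H). auto. Qed.

Lemma merge_inv m x r k : is_strategy m x r -> (1 <= m)%nat ->
  (forall rho, (1 <= rho <= m)%nat -> lev x r rho (cnt m x r k rho) <= w m x r k) /\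
  (forall rho, (1 <= rho <= m)%nat -> w m x r k <= cand x r (cnt m x r k) rho).
Proof.
  intros Hs Hm. induction k as [|k [IH1 IH2]].
  - split; intros rho Hr; simpl; [lra|]. unfold cand.
    pose proof (lev_inc m x r rho 0 Hs Hr). simpl in H |- *. lra.
  - pose proof (pick_range m x r k Hm) as Hpr.
    assert (Hw : w m x r (S k) = cand x r (cnt m x r k) (pick m x r k)) by reflexivity.
    split; intros rho Hr.
    + rewrite cnt_S. destruct (Nat.eqb_spec rho (pick m x r k)) as [->|N].
      * rewrite Hw. unfold cand. lra.
      * pose proof (IH1 rho Hr). pose proof (IH2 _ Hpr). lra.
    + unfold cand. rewrite cnt_S.
      destruct (Nat.eqb_spec rho (pick m x r k)) as [->|N].
      * rewrite Hw. unfold cand. apply Rlt_le. apply (lev_inc m x r); auto.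
      * change (lev x r rho (S (cnt m x r k rho))) with (cand x r (cnt m x r k) rho).
        apply pick_min; auto.
Qed.

Lemma w_mono m x r k : is_strategy m x r -> (1 <= m)%nat -> w m x r k <= w m x r (S k).
Proof.
  intros Hs Hm. destruct (merge_inv m x r k Hs Hm) as [_ H2].
  pose proof (pick_range m x r k Hm). apply H2; auto.
Qed.

Lemma w_pos m x r k : is_strategy m x r -> (1 <= m)%nat -> 0 < w m x r (S k).
Proof.
  intros Hs Hm. simpl. unfold cand. pose proof (pick_range m x r k Hm).
  pose proof (lev_inc m x r (pick m x r k) (cnt m x r k (pick m x r k)) Hs H).
  pose proof (lev_nonneg m x r (pick m x r k) (cnt m x r k (pick m x r k)) Hs H). lra.
Qed.

Definition lsum (f : nat -> R) (l : list nat) : R := fold_right (fun a acc => f a + acc) 0 l.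

Fixpoint rs (f : nat -> R) (k : nat) : R :=
  match k with O => 0 | S k' => rs f k' + f (S k') end.

Lemma lsum_update (g g' : nat -> R) (l : list nat) (p : nat) (d : R) :
  NoDup l -> In p l -> (forall rho, rho <> p -> g' rho = g rho) -> g' p = g p + d ->
  lsum g' l = lsum g l + d.
Proof.
  intros Hnd Hin Ho Hp. induction l as [|a l IH]; [destruct Hin|].
  apply NoDup_cons_iff in Hnd as [Hni Hnd']. simpl. destruct Hin as [->|Hin].
  - rewrite Hp. assert (lsum g' l = lsum g l).
    { clear IH Hnd'. induction l as [|b l IH2]; simpl; auto.
      rewrite Ho by (intro; subst; apply Hni; left; auto).
      rewrite IH2; auto. intro; apply Hni; right; auto. }
    lra.
  - rewrite (IH Hnd' Hin). rewrite Ho by (intro; subst; contradiction). lra.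
Qed.

Lemma lsum_le (f g : nat -> R) l : (forall a, In a l -> f a <= g a) -> lsum f l <= lsum g l.
Proof.
  induction l as [|a l IH]; intros H; simpl; [lra|].
  pose proof (H a (or_introl eq_refl)). pose proof (IH (fun b Hb => H b (or_intror Hb))). lra.
Qed.

Lemma lsum_ext_in (f g : nat -> R) l : (forall a, In a l -> f a = g a) -> lsum f l = lsum g l.
Proof.
  induction l as [|a l IH]; intros H; simpl; auto.
  rewrite (H a (or_introl eq_refl)), IH; auto. intros b Hb; apply H; right; auto.
Qed.

Lemma lsum_plus (f g : nat -> R) l : lsum (fun a => f a + g a) l = lsum f l + lsum g l.
Proof. induction l; simpl; lra. Qed.

Lemma lsum_filter (f : nat -> R) (b : nat) l :
  lsum (fun a => if Nat.eqb a b then 0 else f a) l = lsum f (filter (fun a => negb (Nat.eqb a b)) l).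
Proof.
  induction l as [|a l IH]; simpl; auto. destruct (Nat.eqb a b); simpl; rewrite IH; lra.
Qed.

Lemma lsum_const (c : R) l : lsum (fun _ => c) l = INR (length l) * c.
Proof. induction l; simpl length; [simpl; lra|]. rewrite S_INR. simpl. rewrite IHl. lra. Qed.

Lemma filter_length_one (b : nat) l : NoDup l -> In b l ->
  length (filter (fun a => negb (Nat.eqb a b)) l) = (length l - 1)%nat.
Proof.
  induction l as [|a l IH]; intros Hnd Hin; [destruct Hin|].
  apply NoDup_cons_iff in Hnd as [Hni Hnd']. simpl. destruct (Nat.eqb_spec a b) as [->|N]; simpl.
  - assert (forall l', ~ In b l' -> filter (fun a => negb (Nat.eqb a b)) l' = l').
    { induction l' as [|c l' IHl]; intros Hn; simpl; auto.
      destruct (Nat.eqb_spec c b); [subst; exfalso; apply Hn; left; auto|].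
      simpl. rewrite IHl; auto. intro; apply Hn; right; auto. }
    rewrite H; auto. lia.
  - destruct Hin as [->|Hin]; [contradiction|]. rewrite IH; auto.
    destruct l; [destruct Hin|]. simpl. lia.
Qed.

Lemma rays_in m rho : In rho (seq 1 m) <-> (1 <= rho <= m)%nat.
Proof. rewrite in_seq. lia. Qed.

Lemma merge_sum m x r k : (1 <= m)%nat ->
  rs (w m x r) k = lsum (fun rho => rs (lev x r rho) (cnt m x r k rho)) (seq 1 m).
Proof.
  intros Hm. induction k as [|k IH].
  - simpl. induction (seq 1 m); simpl; auto; lra.
  - simpl rs at 1. rewrite IH.
    symmetry. apply lsum_update with (pick m x r k).
    + apply seq_NoDup.
    + apply rays_in. apply pick_range; auto.
    + intros rho N. rewrite cnt_S. destruct (Nat.eqb_spec rho (pick m x r k)); [contradiction|auto].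
    + rewrite cnt_S, Nat.eqb_refl. simpl rs. reflexivity.
Qed.

Lemma merge_count m x r k : (1 <= m)%nat ->
  lsum (fun rho => INR (cnt m x r k rho)) (seq 1 m) = INR k.
Proof.
  intros Hm. induction k as [|k IH].
  - simpl. induction (seq 1 m); simpl; auto; lra.
  - rewrite S_INR, <- IH. apply lsum_update with (pick m x r k).
    + apply seq_NoDup.
    + apply rays_in. apply pick_range; auto.
    + intros rho N. rewrite cnt_S. destruct (Nat.eqb_spec rho (pick m x r k)); [contradiction|auto].
    + rewrite cnt_S, Nat.eqb_refl. apply S_INR.
Qed.

Lemma rs_shift (f : nat -> R) k n : rs (fun i => f (k + i)%nat) (S n) = f (S k) + rs (fun i => f (S k + i)%nat) n.
Proof.
  induction n as [|n IH].
  - simpl. replace (k + 1)%nat with (S k) by lia. lra.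
  - change (rs (fun i => f (k + i)%nat) (S (S n))) with (rs (fun i => f (k + i)%nat) (S n) + f (k + S (S n))%nat).
    rewrite IH. simpl. replace (k + S (S n))%nat with (S (k + S n)) by lia. lra.
Qed.

Lemma rs_add (f : nat -> R) k n : rs f (k + n) = rs f k + rs (fun i => f (k + i)%nat) n.
Proof.
  induction n as [|n IH]; simpl.
  - replace (k + 0)%nat with k by lia. lra.
  - replace (k + S n)%nat with (S (k + n)) by lia. simpl. rewrite IH. lra.
Qed.

Lemma cand_list m x r : is_strategy m x r -> (1 <= m)%nat -> forall n P k,
  length P = n -> NoDup P -> (forall a, In a P -> (1 <= a <= m)%nat) ->
  rs (fun i => w m x r (k + i)%nat) n <= lsum (cand x r (cnt m x r k)) P.
Proof.
  intros Hs Hm. induction n as [|n IH]; intros P k HL Hnd HP.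
  - simpl. destruct P; [simpl; lra| discriminate].
  - rewrite rs_shift.
    assert (Hw : w m x r (S k) = cand x r (cnt m x r k) (pick m x r k)) by reflexivity.
    assert (Hcs : forall rho, rho <> pick m x r k -> cand x r (cnt m x r (S k)) rho = cand x r (cnt m x r k) rho).
    { intros rho N. unfold cand. rewrite cnt_S. destruct (Nat.eqb_spec rho (pick m x r k)); [contradiction|auto]. }
    destruct (in_dec Nat.eq_dec (pick m x r k) P) as [Hin|Hnin].
    +
      assert (Hex : exists P', lsum (cand x r (cnt m x r k)) P = cand x r (cnt m x r k) (pick m x r k) + lsum (cand x r (cnt m x r k)) P'
                 /\ length P' = n /\ NoDup P' /\ (forall a, In a P' -> In a P /\ a <> pick m x r k)).
      { clear IH HP. revert n HL. induction P as [|a P IHP]; intros n HL; [destruct Hin|].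
        apply NoDup_cons_iff in Hnd as [Hni Hnd']. simpl in HL. destruct Hin as [->|Hin].
        - exists P. split; [simpl; lra|]. split; [lia|]. split; auto.
          intros b Hb. split; [right; auto|]. intro; subst; contradiction.
        - destruct n as [|n]; [destruct P; [destruct Hin|discriminate]|].
          destruct (IHP Hnd' Hin n ltac:(lia)) as [P' [E [L [N H]]]].
          exists (a :: P'). split; [simpl; rewrite E; lra|]. split; [simpl; lia|]. split.
          + constructor; auto. intro Ha. destruct (H a Ha) as [Ha' _]. contradiction.
          + intros b [<-|Hb]; [split; [left; auto|]; intro; subst; contradiction|].
            destruct (H b Hb). split; [right|]; auto. }
      destruct Hex as [P' [E [L [N HP']]]]. rewrite E, <- Hw.
      assert (lsum (cand x r (cnt m x r k)) P' = lsum (cand x r (cnt m x r (S k))) P').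
      { apply lsum_ext_in. intros a Ha. symmetry. apply Hcs. apply HP'; auto. }
      rewrite H. pose proof (IH P' (S k) L N ltac:(intros a Ha; apply HP; apply HP'; auto)). lra.
    + destruct P as [|a P]; [discriminate|]. apply NoDup_cons_iff in Hnd as [Hni Hnd']. simpl in HL.
      simpl lsum. 
      assert (Ha : w m x r (S k) <= cand x r (cnt m x r k) a) by (apply pick_min; auto; apply HP; left; auto).
      assert (lsum (cand x r (cnt m x r k)) P = lsum (cand x r (cnt m x r (S k))) P).
      { apply lsum_ext_in. intros b Hb. symmetry. apply Hcs. intro E; subst; apply Hnin; right; auto. }
      unfold lsum in H |- *. simpl fold_right. fold (lsum (cand x r (cnt m x r k)) P) in *.
      fold (lsum (cand x r (cnt m x r (S k))) P) in *.
      pose proof (IH P (S k) ltac:(lia) Hnd' ltac:(intros b Hb; apply HP; right; auto)). lra.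
Qed.

Lemma step_costs_ge x t N : 0 <= t -> 2 * rs x N <= step_costs x t N.
Proof. intros Ht. induction N; simpl; lra. Qed.

Definition rayrs x r rho N := rs (fun n => if Nat.eqb (r n) rho then x n else 0) N.

Lemma rs_rays m x r N : (forall n, (1 <= n)%nat -> (1 <= r n <= m)%nat) ->
  rs x N = lsum (fun rho => rayrs x r rho N) (seq 1 m).
Proof.
  intros Hr. induction N as [|N IH].
  - unfold rayrs. simpl. rewrite (lsum_const 0). lra.
  - change (rs x (S N)) with (rs x N + x (S N)). rewrite IH.
    transitivity (lsum (fun rho => rayrs x r rho N + (if Nat.eqb (r (S N)) rho then x (S N) else 0)) (seq 1 m)).
    + rewrite lsum_plus. f_equal.
      rewrite (lsum_update (fun _ => 0) _ (seq 1 m) (r (S N)) (x (S N))).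
      * rewrite lsum_const. lra.
      * apply seq_NoDup.
      * apply rays_in. apply Hr. lia.
      * intros rho N'. destruct (Nat.eqb_spec (r (S N)) rho); [subst; contradiction|auto].
      * rewrite Nat.eqb_refl. lra.
    + apply lsum_ext_in. intros a _. reflexivity.
Qed.

Lemma rayrs_mono m x r rho N N' : is_strategy m x r -> (N <= N')%nat -> rayrs x r rho N <= rayrs x r rho N'.
Proof.
  intros [Hp _] H. induction H; [lra|]. unfold rayrs in *. simpl.
  destruct (Nat.eqb (r (S m0)) rho); [|lra]. pose proof (Hp (S m0) ltac:(lia)) as [Hx _]. lra.
Qed.

Lemma rayrs_rec m x r rho j : is_strategy m x r -> (1 <= rho <= m)%nat ->
  rs (lev x r rho) (S j) <= rayrs x r rho (tau x r rho (lev x r rho j)).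
Proof.
  intros Hs Hr.
  assert (Hlast : forall N, (1 <= N)%nat -> r N = rho -> rayrs x r rho N = rayrs x r rho (N - 1) + x N).
  { intros N HN HrN. destruct N as [|N]; [lia|]. unfold rayrs. simpl. rewrite HrN, Nat.eqb_refl.
    replace (N - 0)%nat with N by lia. reflexivity. }
  induction j as [|j IH].
  - destruct (tau_spec m x r rho (lev x r rho 0) Hs Hr) as [H1 [[H2 _] _]].
    rewrite Hlast by auto. simpl rs.
    pose proof (rayrs_mono m x r rho 0 (tau x r rho 0 - 1) Hs ltac:(lia)). unfold rayrs at 1 in H. simpl in H.
    simpl lev. lra.
  - set (T1 := tau x r rho (lev x r rho (S j))).
    destruct (tau_spec m x r rho (lev x r rho (S j)) Hs Hr) as [H1 [[H2 _] _]]. fold T1 in H1, H2.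
    pose proof (tau_inc m x r rho j Hs Hr) as Hi. fold T1 in Hi.
    rewrite Hlast by auto.
    pose proof (rayrs_mono m x r rho (tau x r rho (lev x r rho j)) (T1 - 1) Hs ltac:(lia)).
    change (rs (lev x r rho) (S (S j))) with (rs (lev x r rho) (S j) + lev x r rho (S (S j))).
    assert (lev x r rho (S (S j)) = x T1) by reflexivity. lra.
Qed.

Lemma exists_argmax (g : nat -> nat) m : (1 <= m)%nat ->
  exists rho, (1 <= rho <= m)%nat /\ forall rho', (1 <= rho' <= m)%nat -> (g rho' <= g rho)%nat.
Proof.
  induction m as [|m IH]; intros H; [lia|].
  destruct m as [|m].
  - exists 1%nat. split; [lia|]. intros; replace rho' with 1%nat by lia; lia.
  - destruct (IH ltac:(lia)) as [a [Ha Hg]].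
    destruct (Compare_dec.le_lt_dec (g (S (S m))) (g a)).
    + exists a. split; [lia|]. intros b Hb. destruct (Nat.eq_dec b (S (S m))); [subst; auto|]. apply Hg; lia.
    + exists (S (S m)). split; [lia|]. intros b Hb. destruct (Nat.eq_dec b (S (S m))); [subst; auto|].
      pose proof (Hg b ltac:(lia)). lia.
Qed.

Lemma limit_le (S a M : R) : (forall D, M < D -> S <= a * D) -> S <= a * M.
Proof.
  intros H. destruct (Rle_dec S (a * M)) as [|N]; auto. exfalso.
  destruct (Rle_dec a 0).
  - pose proof (H (M + 1) ltac:(lra)). nra.
  - set (e := (S - a * M) / (2 * a)).
    assert (He : 0 < e) by (unfold e; apply Rdiv_lt_0_compat; lra).
    pose proof (H (M + e) ltac:(lra)).
    assert (a * (M + e) = a * M + (S - a * M) / 2) by (unfold e; field; lra). lra.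
Qed.

Lemma target_bound m x r t lam C' rho D N : is_strategy m x r -> 0 <= t ->
  (forall q, ratios m lam t x r q -> q <= C') -> (1 <= rho <= m)%nat -> lam <= D -> 0 < D ->
  (forall i, (1 <= i)%nat -> (i <= N)%nat -> r i = rho -> x i < D) ->
  step_costs x t N + D <= C' * D.
Proof.
  intros Hs Ht Hub Hr HD HD0 Hbefore.
  destruct Hs as [Hp Hu] eqn:E.
  destruct (least_exists (fun i => r i = rho /\ D <= x i)) as [j [Hj1 [[Hrj HDj] Hmin]]].
  { destruct (Hu rho Hr D) as [i [Hi [Hri Hxi]]]. exists i. split; auto. split; auto. lra. }
  assert (HjN : (N < j)%nat).
  { destruct (Compare_dec.le_lt_dec j N) as [L|L]; auto. exfalso.
    pose proof (Hbefore j Hj1 L Hrj). lra. }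
  assert (Hq : (step_costs x t (j - 1) + D) / D <= C').
  { apply Hub. exists rho, D, (step_costs x t (j - 1) + D). split; auto. split; auto. split; auto.
    exists j. repeat split; auto. }
  assert (step_costs x t N <= step_costs x t (j - 1)).
  { apply step_costs_mono; auto; [|lia]. intros i Hi. pose proof (Hp i Hi). lra. }
  assert (step_costs x t (j - 1) + D <= C' * D).
  { apply Rmult_le_reg_r with (/ D). apply Rinv_0_lt_compat; lra.
    replace (C' * D * / D) with C' by (field; lra). exact Hq. }
  lra.
Qed.

Lemma main_ineq m x r t lam C' k : is_strategy m x r -> (2 <= m)%nat -> 0 <= t -> 0 < lam ->
  (forall q, ratios m lam t x r q -> q <= C') -> lam <= w m x r k ->
  2 * rs (w m x r) (k + (m - 1)) <= (C' - 1) * w m x r k.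
Proof.
  intros Hs Hm Ht Hl Hub Hwk.
  assert (Hm1 : (1 <= m)%nat) by lia.
  destruct (merge_inv m x r k Hs Hm1) as [Inv1 Inv2].
  set (c := cnt m x r k).
  set (g := fun rho => tau x r rho (lev x r rho (c rho))).
  destruct (exists_argmax g m Hm1) as [rs0 [Hrs0 Hmax]].
  set (T := g rs0).
  destruct (tau_spec m x r rs0 (lev x r rs0 (c rs0)) Hs Hrs0) as [HT1 [[HrT _] _]].
  fold (g rs0) T in HT1, HrT.
  assert (HB : step_costs x t (T - 1) <= (C' - 1) * w m x r k).
  { apply limit_le. intros D HD.
    assert (step_costs x t (T - 1) + D <= C' * D); [|lra].
    apply (target_bound m x r t lam C' rs0 D (T - 1)); auto; try lra.
    intros i Hi1 Hi2 Hri.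
    pose proof (tau_before m x r rs0 (lev x r rs0 (c rs0)) i Hs Hrs0 Hi1 ltac:(fold (g rs0) T; lia) Hri).
    pose proof (Inv1 rs0 Hrs0). fold c in H0. lra. }
  set (others := filter (fun a => negb (Nat.eqb a rs0)) (seq 1 m)).
  assert (HA : 2 * (rs (w m x r) k + lsum (cand x r c) others) <= step_costs x t (T - 1)).
  { eapply Rle_trans; [|apply step_costs_ge; auto].
    apply Rmult_le_compat_l; [lra|].
    destruct Hs as [Hp Hu] eqn:E.
    rewrite (rs_rays m x r (T - 1)) by (intros n Hn; apply (Hp n Hn)).
    rewrite (merge_sum m x r k Hm1). fold c. unfold others. rewrite <- lsum_filter.
    rewrite <- lsum_plus. apply lsum_le. intros rho Hrho. apply rays_in in Hrho.
    destruct (Nat.eqb_spec rho rs0) as [->|Nr].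
    - destruct (c rs0) as [|c'] eqn:Ec.
      + simpl rs. pose proof (rayrs_mono m x r rs0 0 (T - 1) Hs ltac:(lia)). unfold rayrs at 1 in H. simpl in H. lra.
      + pose proof (rayrs_rec m x r rs0 c' Hs Hrs0).
        pose proof (tau_inc m x r rs0 c' Hs Hrs0).
        assert (tau x r rs0 (lev x r rs0 (S c')) = T) by (unfold T, g; rewrite Ec; reflexivity).
        pose proof (rayrs_mono m x r rs0 (tau x r rs0 (lev x r rs0 c')) (T - 1) Hs ltac:(lia)). lra.
    - pose proof (rayrs_rec m x r rho (c rho) Hs Hrho).
      assert (Hle : (g rho <= T)%nat) by (apply Hmax; auto).
      destruct (tau_spec m x r rho (lev x r rho (c rho)) Hs Hrho) as [_ [[Hrr _] _]].
      fold (g rho) in Hrr.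
      assert (Hne : g rho <> T) by (intro Eq; rewrite Eq, HrT in Hrr; auto).
      pose proof (rayrs_mono m x r rho (g rho) (T - 1) Hs ltac:(lia)).
      change (rs (lev x r rho) (S (c rho))) with (rs (lev x r rho) (c rho) + lev x r rho (S (c rho))) in H.
      unfold cand. unfold g in H0. lra. }
  assert (HC : rs (fun i => w m x r (k + i)%nat) (m - 1) <= lsum (cand x r c) others).
  { apply (cand_list m x r Hs Hm1).
    - unfold others. rewrite filter_length_one; [rewrite seq_length; auto|apply seq_NoDup|apply rays_in; auto].
    - apply NoDup_filter, seq_NoDup.
    - intros a Ha. unfold others in Ha. apply filter_In in Ha as [Ha _]. apply rays_in; auto. }
  rewrite rs_add. lra.
Qed.

Lemma alg (a S0 S1 K P : R) (p : nat) : 0 < K -> 0 < P ->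
  a * (K * S0 / P) ^ p <= (K * S1 / (P + 1)) ^ S p ->
  a * S0 ^ p * ((P + 1) ^ S p / P ^ p) <= K * S1 ^ S p.
Proof.
  intros HK HP H. unfold Rdiv in *.
  rewrite !Rpow_mult_distr, !pow_inv in H.
  assert (HKp : 0 < K ^ p) by (apply pow_lt; auto).
  assert (HPp : 0 < P ^ p) by (apply pow_lt; auto).
  assert (HQp : 0 < (P + 1) ^ S p) by (apply pow_lt; lra).
  assert (HQ1 : 0 < (P + 1) ^ p) by (apply pow_lt; lra).
  cbn [pow] in H |- *. 
  set (f := (P + 1) * (P + 1) ^ p * / K ^ p).
  assert (Hf : 0 < f).
  { unfold f. cbn [pow] in HQp. apply Rmult_lt_0_compat; auto. apply Rinv_0_lt_compat; auto. }
  pose proof (Rmult_le_compat_r f _ _ (Rlt_le _ _ Hf) H) as H2.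
  unfold f in H2.
  cbn [pow] in HQp.
  replace (a * (K ^ p * S0 ^ p * / P ^ p) * ((P + 1) * (P + 1) ^ p * / K ^ p))
    with (a * S0 ^ p * ((P + 1) * (P + 1) ^ p * / P ^ p)) in H2 by (field; lra).
  replace (K * K ^ p * (S1 * S1 ^ p) * / ((P + 1) * (P + 1) ^ p) * ((P + 1) * (P + 1) ^ p * / K ^ p))
    with (K * (S1 * S1 ^ p)) in H2 by (field; lra).
  exact H2.
Qed.

Lemma uniform_N m x r lam l : is_strategy m x r -> (forall a, In a l -> (1 <= a <= m)%nat) ->
  exists N, forall rho, In rho l -> lam <= lev x r rho N.
Proof.
  intros Hs. induction l as [|a l IH]; intros Hl.
  - exists O. intros rho [].
  - destruct (IH (fun b Hb => Hl b (or_intror Hb))) as [N1 HN1].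
    destruct (lev_unbounded m x r a lam Hs (Hl a (or_introl eq_refl))) as [N2 HN2].
    exists (Nat.max N1 N2). intros rho [->|Hr].
    + pose proof (lev_mono m x r rho N2 (Nat.max N1 N2) Hs (Hl rho (or_introl eq_refl)) ltac:(lia)). lra.
    + pose proof (lev_mono m x r rho N1 (Nat.max N1 N2) Hs (Hl rho (or_intror Hr)) ltac:(lia)).
      pose proof (HN1 rho Hr). lra.
Qed.

Lemma rs_nonneg_mono (f : nat -> R) k j : (forall i, (1 <= i)%nat -> 0 <= f i) -> (k <= j)%nat -> rs f k <= rs f j.
Proof. intros Hf H. induction H; [lra|]. simpl. pose proof (Hf (S m) ltac:(lia)). lra. Qed.

Lemma lower_bound m x r t lam C' : is_strategy m x r -> (2 <= m)%nat -> 0 <= t -> 0 < lam ->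
  has_competitive_ratio m lam t x r C' ->
  1 + 2 * (INR m ^ m / (INR m - 1) ^ (m - 1)) <= C'.
Proof.
  intros Hs Hm Ht Hl [Hub _].
  assert (Hm1 : (1 <= m)%nat) by lia.
  assert (Hub' : forall q, ratios m lam t x r q -> q <= C') by exact Hub.
  destruct (uniform_N m x r lam (seq 1 m) Hs (fun a Ha => proj1 (rays_in m a) Ha)) as [N HN].
  set (k0 := (m * N)%nat).
  assert (Hk0 : lam <= w m x r k0).
  { destruct (classic (exists rho, In rho (seq 1 m) /\ (N <= cnt m x r k0 rho)%nat)) as [[rho [Hr Hc]]|Hno].
    - destruct (merge_inv m x r k0 Hs Hm1) as [I1 _].
      apply rays_in in Hr as Hr'.
      pose proof (I1 rho Hr'). pose proof (lev_mono m x r rho N (cnt m x r k0 rho) Hs Hr' Hc).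
      pose proof (HN rho Hr). lra.
    - exfalso. pose proof (merge_count m x r k0 Hm1) as Hc.
      assert (Hlt : forall rho, In rho (seq 1 m) -> INR (cnt m x r k0 rho) <= INR N - 1).
      { intros rho Hr. assert (cnt m x r k0 rho < N)%nat.
        { destruct (Compare_dec.lt_dec (cnt m x r k0 rho) N); auto. exfalso. apply Hno. exists rho. split; auto; lia. }
        rewrite <- (Nat.succ_pred_pos N) by lia. rewrite S_INR. replace (INR (Nat.pred N) + 1 - 1) with (INR (Nat.pred N)) by ring. apply le_INR. lia. }
      pose proof (lsum_le _ _ _ Hlt). rewrite lsum_const, length_seq in H. rewrite Hc in H.
      unfold k0 in H. rewrite mult_INR in H. 
      assert (1 <= INR m) by (apply (le_INR 1); lia). nra. }
  assert (Hwk : forall k, (k0 <= k)%nat -> lam <= w m x r k).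
  { intros k Hk. induction Hk; auto. pose proof (w_mono m x r m0 Hs Hm1). lra. }
  assert (Hk01 : (1 <= k0)%nat).
  { destruct k0; [simpl in Hk0; lra|lia]. }
  assert (Hwnn : forall i, (1 <= i)%nat -> 0 <= w m x r i).
  { intros i Hi. destruct i; [lia|]. pose proof (w_pos m x r i Hs Hm1). lra. }
  destruct m as [|p]; [lia|]. replace (S p - 1)%nat with p in * by lia.
  assert (Hp1 : (1 <= p)%nat) by lia.
  assert (HP : 1 <= INR p) by (apply (le_INR 1); lia).
  set (K := (C' - 1) / 2).
  assert (HK : 0 < K).
  { pose proof (main_ineq (S p) x r t lam C' k0 Hs Hm Ht Hl Hub' Hk0) as H.
    replace (S p - 1)%nat with p in H by lia.
    assert (w (S p) x r k0 <= rs (w (S p) x r) (k0 + p)).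
    { destruct k0 as [|k']; [lia|].
      pose proof (rs_nonneg_mono (w (S p) x r) (S k') (S k' + p) Hwnn ltac:(lia)). simpl in H0 |- *.
      assert (0 <= rs (w (S p) x r) k') by (apply (rs_nonneg_mono _ 0 k' Hwnn); lia). simpl in H1. lra. }
    assert (C' - 1 > 0).
    { destruct (Rle_dec (C' - 1) 0); [|lra]. exfalso.
      pose proof (Hwnn k0 Hk01). assert ((C' - 1) * w (S p) x r k0 <= 0) by nra. lra. }
    unfold K. lra. }
  assert (Hfin : INR (S p) ^ S p / (INR (S p) - 1) ^ p <= K).
  { apply (potential (rs (w (S p) x r)) k0 p K); auto.
    - apply Rdiv_lt_0_compat; apply pow_lt; rewrite S_INR; lra.
    - intros k Hk. split.
      + destruct k; [lia|]. pose proof (w_pos (S p) x r k Hs Hm1).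
        assert (0 <= rs (w (S p) x r) k) by (apply (rs_nonneg_mono _ 0 k Hwnn); lia). cbn [rs]. lra.
      + cbn [rs]. pose proof (Hwnn (S k) ltac:(lia)). lra.
    - intros k Hk.
      pose proof (main_ineq (S p) x r t lam C' (S k) Hs Hm Ht Hl Hub' (Hwk (S k) ltac:(lia))) as H.
      replace (S p - 1)%nat with p in H by lia.
      replace (S k + p)%nat with (k + S p)%nat in H by lia.
      assert (Ew : w (S p) x r (S k) = rs (w (S p) x r) (S k) - rs (w (S p) x r) k) by (cbn [rs]; lra).
      set (S0 := rs (w (S p) x r) k) in *.
      set (S1 := rs (w (S p) x r) (S k)) in *.
      set (a := rs (w (S p) x r) (k + S p)) in *.
      assert (HS0 : 0 < S0).
      { unfold S0. destruct k; [lia|]. pose proof (w_pos (S p) x r k Hs Hm1).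
        assert (0 <= rs (w (S p) x r) k) by (apply (rs_nonneg_mono _ 0 k Hwnn); lia). cbn [rs]. lra. }
      assert (Ha : 0 <= a).
      { unfold a. apply (rs_nonneg_mono _ 0 _ Hwnn). lia. }
      assert (Hsum : a + INR p * (K * S0 / INR p) <= K * S1).
      { replace (INR p * (K * S0 / INR p)) with (K * S0) by (field; lra).
        rewrite Ew in H. unfold K. lra. }
      pose proof (amgm p a (K * S0 / INR p) Ha ltac:(apply Rdiv_lt_0_compat; [apply Rmult_lt_0_compat|]; lra)) as Am.
      assert (Hmon : ((a + INR p * (K * S0 / INR p)) / INR (S p)) ^ S p <= (K * S1 / (INR p + 1)) ^ S p).
      { apply pow_incr. rewrite S_INR. split.
        - assert (0 <= INR p * (K * S0 / INR p)) by (apply Rmult_le_pos; [lra|]; left; apply Rdiv_lt_0_compat; [apply Rmult_lt_0_compat|]; lra).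
          unfold Rdiv. apply Rmult_le_pos; [lra|]. left; apply Rinv_0_lt_compat; lra.
        - unfold Rdiv. apply Rmult_le_compat_r; [left; apply Rinv_0_lt_compat; lra|]. lra. }
      pose proof (alg a S0 S1 K (INR p) p HK ltac:(lra) ltac:(lra)) as Al.
      rewrite S_INR. replace (INR p + 1 - 1) with (INR p) by ring. lra. }
  unfold K in Hfin. lra.
Qed.

Theorem theorem6 (m : nat) (t lam : R)
  (hm : (2 <= m)%nat) (ht : 0 <= t) (hlam : 0 < lam) :
  let s := t / (2 * lam) in
  let q := INR m / (INR m - 1) in
  (s <= 1 / (q ^ (m - 1) - 1) ->
     let x := fun i : nat =>
       (( / (INR m - 1) * (1 - (q ^ (m - 1) - 1) * s) * INR i + (1 + s)) * q ^ i - s) * lam in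
     is_strategy m x (cyclic_rays m) /\
     is_optimal m lam t x (cyclic_rays m) /\
     has_competitive_ratio m lam t x (cyclic_rays m)
       (1 + 2 * (INR m ^ m / (INR m - 1) ^ (m - 1)))) /\
  (1 / (q ^ (m - 1) - 1) <= s ->
     let x := fun i : nat =>
       ((1 + s) * Rpower (1 + / s) (INR i / (INR m - 1)) - s) * lam in
     let a := Rpower (1 + / s) (- (1 / (INR m - 1))) in
     is_strategy m x (cyclic_rays m) /\
     has_competitive_ratio m lam t x (cyclic_rays m)
       ((a - (3 + 2 * / s)) / (a - 1))).
Proof.
  destruct m as [|[|p0]]; [lia|lia|].
  intros s q. replace (S (S p0) - 1)%nat with (S p0) by lia.
  set (p := S p0) in *.
  assert (Hp : (1 <= p)%nat) by (unfold p; lia).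
  split.
  - intros Hs x.
    pose proof (case1_facts p t lam Hp ht hlam Hs) as [Hx0 [Hxl Hid]].
    assert (HKs : 0 <= INR (S p) ^ S p / (INR (S p) - 1) ^ p).
    { assert (1 <= INR p) by (apply (le_INR 1); lia). rewrite S_INR.
      left. apply Rdiv_lt_0_compat; apply pow_lt; lra. }
    assert (HCR : has_competitive_ratio (S p) lam t x (cyclic_rays (S p))
                    (1 + 2 * (INR (S p) ^ S p / (INR (S p) - 1) ^ p))).
    { apply cyclic_ratio; auto; [lra|].
      intro i. pose proof (Hxl i). pose proof (pos_INR i).
      assert (0 <= INR i * (lam / INR p)).
      { apply Rmult_le_pos; auto. left. apply Rdiv_lt_0_compat; auto. apply (lt_0_INR p); lia. }
      unfold x, q, s. cbv beta. lra. }
    split; [|split].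
    + apply (cyclic_strategy p lam (lam / INR p)); auto.
      apply Rdiv_lt_0_compat; auto. apply (lt_0_INR p); lia.
    + exists (1 + 2 * (INR (S p) ^ S p / (INR (S p) - 1) ^ p)). split; auto.
      intros x' r' C' Hs' Hc'. apply (lower_bound (S p) x' r' t lam C'); auto.
    + exact HCR.
  - intros Hs x a.
    pose proof (case2_facts p t lam Hp ht hlam Hs) as [Hx0 [[delta [Hd Hxl]] [HC1 Hid]]].
    split.
    + apply (cyclic_strategy p lam delta); auto.
    + apply cyclic_ratio; auto.
      intro i. pose proof (Hxl i). pose proof (pos_INR i).
      assert (0 <= INR i * delta) by (apply Rmult_le_pos; lra). unfold x, s. cbv beta. lra.
Qed.
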